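(* Let $X$ be a Banach space and $x\in S_X$. (1) If $x$ is a preserved extreme point of $B_X$ and $x$ is a $\Delta$-point, then $x$ is a super $\Delta$-point. (2) If $x$ is an extreme point of $B_X$ and $x$ is a super $\Delta$-point, then $x$ is a ccs $\Delta$-point. (3) In particular, every preserved extreme point of $B_X$ which is a $\Delta$-point is both a super $\Delta$-point and a ccs $\Delta$-point.
   Context: $X$ is a real or complex Banach space with closed unit ball $B_X$, unit sphere $S_X$, and canonical embedding $J_X:X\to X^{**}$. A point $x\in B_X$ is a preserved extreme point if $J_X(x)$ is an extreme point of $B_{X^{**}}$. A slice of $B_X$ is a non-empty set $\{y\in B_X:\operatorname{Re}x^*(y)>\|x^*\|-\delta\}$ with $x^*\in X^*$, $\delta>0$; a ccs of $B_X$ is a set $\sum_{i=1}^n\lambda_iS_i$ with $\lambda_i\in(0,1]$, $\sum\lambda_i=1$, $S_i$ slices of $B_X$. For $x\in S_X$: $x$ is a $\Delta$-point if $\sup_{y\in S}\|x-y\|=2$ for every slice $S$ of $B_X$ containing $x$; a super $\Delta$-point if $\sup_{y\in V}\|x-y\|=2$ for every relatively weakly open subset $V$ of $B_X$ containing $x$; a ccs $\Delta$-point if $\sup_{y\in C}\|x-y\|=2$ for every ccs $C$ of $B_X$ containing $x$. *)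

(* Defs.v *)
From HB Require Import structures.
From mathcomp Require Import all_boot all_order all_algebra.
From mathcomp Require Import all_classical all_reals all_analysis.
From mathcomp Require Export complex.
Set Implicit Arguments. Unset Strict Implicit. Unset Printing Implicit Defensive.
Import Order.TTheory GRing.Theory Num.Theory.
Local Open Scope classical_set_scope.
Local Open Scope ring_scope.

(* Everything below is parameterised by the scalar field K (R or R[i])
   and by its real-part map [re] (identity in the real case, 'Re in the
   complex case).  Norms and real parts take values in K (they are real). *)
Section BanachNotions.
Variables (K : numFieldType) (re : K -> K) (X : normedModType K).

Definition unit_ball : set X := [set y | `|y| <= 1].
Definition unit_sphere : set X := [set y | `|y| = 1].

Definition is_sup (A : set K) (r : K) : Prop :=
  (forall a, A a -> a <= r) /\ (forall s, (forall a, A a -> a <= s) -> r <= s).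

Definition dual_elt (f : X -> K) : Prop :=
  (forall (a : K) (y z : X), f (a *: y + z) = a * f y + f z) /\
  (exists M : K, forall y, `|f y| <= M * `|y|).

Definition dual_norm (f : X -> K) (r : K) : Prop :=
  is_sup [set `|f y| | y in unit_ball] r.

(* X^** : bounded linear functionals on X^*; they are represented by maps
   (X -> K) -> K of which only the values on X^* matter. *)
Definition bidual_elt (Phi : (X -> K) -> K) : Prop :=
  (forall (a : K) (f g : X -> K), dual_elt f -> dual_elt g ->
     Phi (fun y => a * f y + g y) = a * Phi f + Phi g) /\
  (exists M : K, forall f r, dual_elt f -> dual_norm f r -> `|Phi f| <= M * r).

Definition bidual_ball (Phi : (X -> K) -> K) : Prop :=
  bidual_elt Phi /\
  (forall f r, dual_elt f -> dual_norm f r -> `|Phi f| <= r).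

Definition bidual_eq (Phi Psi : (X -> K) -> K) : Prop :=
  forall f, dual_elt f -> Phi f = Psi f.

Definition canon_emb (x : X) : (X -> K) -> K := fun f => f x.

Definition extreme_point (x : X) : Prop :=
  unit_ball x /\
  forall (y z : X) (l : K), unit_ball y -> unit_ball z -> 0 < l < 1 ->
    x = l *: y + (1 - l) *: z -> y = z.

Definition bidual_extreme_point (Phi : (X -> K) -> K) : Prop :=
  bidual_ball Phi /\
  forall (Psi1 Psi2 : (X -> K) -> K) (l : K),
    bidual_ball Psi1 -> bidual_ball Psi2 -> 0 < l < 1 ->
    bidual_eq Phi (fun f => l * Psi1 f + (1 - l) * Psi2 f) ->
    bidual_eq Psi1 Psi2.

Definition preserved_extreme_point (x : X) : Prop :=
  unit_ball x /\ bidual_extreme_point (canon_emb x).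

Definition slice (S : set X) : Prop :=
  (exists (f : X -> K) (r delta : K),
     [/\ dual_elt f, dual_norm f r, 0 < delta &
         S = [set y | unit_ball y /\ r - delta < re (f y)]]) /\
  S !=set0.

Definition ccs (C : set X) : Prop :=
  exists (n : nat) (l : 'I_n -> K) (S : 'I_n -> set X),
    [/\ forall i, 0 < l i <= 1,
        \sum_(i < n) l i = 1,
        forall i, slice (S i) &
        C = [set z | exists y : 'I_n -> X,
                       (forall i, S i (y i)) /\ z = \sum_(i < n) l i *: y i]].

(* weakly open subsets of X (weak topology sigma(X, X^* ) ), via its
   standard basic neighbourhoods {y | |f_i (y - u)| < eps, i < n} *)
Definition weakly_open (U : set X) : Prop :=
  forall u, U u -> exists (n : nat) (f : 'I_n -> X -> K) (eps : K),
    [/\ forall i, dual_elt (f i), 0 < eps &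
        [set y | forall i, `|f i (y - u)| < eps] `<=` U].

Definition rel_weakly_open_ball (V : set X) : Prop :=
  exists U, weakly_open U /\ V = U `&` unit_ball.

Definition diam2_from (x : X) (A : set X) : Prop :=
  is_sup [set `|x - y| | y in A] 2.

Definition Delta_point (x : X) : Prop :=
  unit_sphere x /\ forall S, slice S -> S x -> diam2_from x S.

Definition super_Delta_point (x : X) : Prop :=
  unit_sphere x /\ forall V, rel_weakly_open_ball V -> V x -> diam2_from x V.

Definition ccs_Delta_point (x : X) : Prop :=
  unit_sphere x /\ forall C, ccs C -> C x -> diam2_from x C.

End BanachNotions.

(* Main.v *)
Require Import Defs.
From HB Require Import structures.
From mathcomp Require Import all_boot all_order all_algebra.
From mathcomp Require Import all_classical all_reals all_analysis.
From mathcomp Require Import complex.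
From mathcomp Require Import ring lra.
Import Order.TTheory GRing.Theory Num.Theory.
Local Open Scope ring_scope.
Local Open Scope classical_set_scope.

Section Basic.
Variables (K : numFieldType) (X : normedModType K).

Lemma dual0 (f : X -> K) : dual_elt f -> f 0 = 0.
Proof.
case=> lin _; have := lin 1 0 0; rewrite scale1r addr0 mul1r => h.
by apply/esym/(addrI (f 0)); rewrite addr0 -h.
Qed.

Lemma dualD (f : X -> K) y z : dual_elt f -> f (y + z) = f y + f z.
Proof. by move=> [lin _]; rewrite -[y]scale1r lin mul1r scale1r. Qed.

Lemma dualZ (f : X -> K) a y : dual_elt f -> f (a *: y) = a * f y.
Proof. by move=> df; rewrite -[a *: y]addr0 (proj1 df) dual0 // addr0. Qed.

Lemma dualB (f : X -> K) y z : dual_elt f -> f (y - z) = f y - f z.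
Proof.
move=> df; rewrite -scaleN1r dualD // dualZ //.
by rewrite mulN1r.
Qed.

Lemma dual_sum (f : X -> K) (I : Type) (r : seq I) (l : I -> K) (y : I -> X) :
  dual_elt f -> f (\sum_(i <- r) l i *: y i) = \sum_(i <- r) l i * f (y i).
Proof.
move=> df; elim: r => [|a r IH]; first by rewrite !big_nil dual0.
by rewrite !big_cons dualD // dualZ // IH.
Qed.

Lemma dual_bound_lin (f : X -> K) : dual_elt f ->
  exists M, 0 <= M /\ forall y, `|f y| <= M * `|y|.
Proof.
case=> _ [M HM]; exists `|M|; split => // y.
have h := HM y; apply: (le_trans h).
have h0 : 0 <= M * `|y| by apply: le_trans h.
by rewrite -{1}(ger0_norm h0) normrM normr_id.
Qed.

Lemma dual_bound (f : X -> K) : dual_elt f ->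
  exists M, 0 <= M /\ forall y, unit_ball y -> `|f y| <= M.
Proof.
move=> /dual_bound_lin [M [M0 HM]]; exists M; split => // y yB.
by apply: (le_trans (HM y)); apply: ler_piMr.
Qed.

Lemma dual_norm_ub (f : X -> K) r y : dual_norm f r -> unit_ball y -> `|f y| <= r.
Proof. by move=> [ub _] yB; apply: ub; exists y. Qed.

Lemma ball_dist2 (x y : X) : unit_ball x -> unit_ball y -> `|x - y| <= 2.
Proof.
rewrite /unit_ball /= => hx hy; apply: (le_trans (ler_normB x y)).
by rewrite -[2]/(1 + 1); apply: lerD.
Qed.

Lemma is_sup_gt {x : X} {S : set X} {s : K} :
  is_sup [set `|x - y| | y in S] 2 -> s \is Num.real -> s < 2 ->
  exists y, S y /\ s < `|x - y|.
Proof.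
move=> [_ lub] sr s2; apply: contrapT => nex.
have : 2 <= s.
  apply: lub => _ [y Sy <-].
  by rewrite real_leNgt //; apply/negP => sa; apply: nex; exists y.
by move=> h; have := lt_le_trans s2 h; rewrite ltxx.
Qed.

Lemma diam2I (x : X) (S : set X) : unit_ball x -> S `<=` @unit_ball K X ->
  (forall s, s \is Num.real -> s < 2 -> exists y, S y /\ s < `|x - y|) ->
  diam2_from x S.
Proof.
move=> xB SB H; split; first by move=> _ [y Sy <-]; apply: ball_dist2 => //; apply: SB.
move=> s ub.
have [y [Sy _]] := H 0 (real0 _) (ltr0Sn _ 1).
have sr : s \is Num.real.
  have h : `|x - y| <= s by apply: ub; exists y.
  by rewrite -(ler_real h) normr_real.
rewrite real_leNgt //; apply/negP => s2.
have [z [Sz sz]] := H s sr s2.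
have h : `|x - z| <= s by apply: ub; exists z.
by have := lt_le_trans sz h; rewrite ltxx.
Qed.

Lemma diam2_sub (x : X) (V C : set X) : unit_ball x -> C `<=` @unit_ball K X ->
  V `<=` C -> diam2_from x V -> diam2_from x C.
Proof.
move=> xB CB VC dV; apply: diam2I => // s sr s2.
have [y [Vy sy]] := is_sup_gt dV sr s2.
by exists y; split => //; apply: VC.
Qed.
End Basic.

Section Part2.
Variables (K : numFieldType) (re : K -> K) (X : normedModType K).
Hypothesis re_add : forall a b, re (a + b) = re a + re b.
Hypothesis re_le : forall a, re a <= `|a|.
Local Notation B := (@unit_ball K X).

Lemma re0 : re 0 = 0.
Proof. by apply/esym/(addrI (re 0)); rewrite -re_add !addr0. Qed.
Lemma reN a : re (- a) = - re a.
Proof. by apply/(addrI (re a)); rewrite -re_add !subrr re0. Qed.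
Lemma reB a b : re (a - b) = re a - re b.
Proof. by rewrite re_add reN. Qed.
Lemma re_real a : re a \is Num.real.
Proof. by rewrite (ler_real (re_le a)) normr_real. Qed.
Lemma re_ge a : - `|a| <= re a.
Proof. by rewrite lerNl -reN -normrN re_le. Qed.

Lemma sum_ball n (l : 'I_n -> K) (y : 'I_n -> X) (P : pred 'I_n) :
  (forall i, 0 <= l i) -> (forall i, B (y i)) ->
  `|\sum_(i | P i) l i *: y i| <= \sum_(i | P i) l i.
Proof.
move=> l0 yB; apply: (le_trans (ler_norm_sum _ _ _)); apply: ler_sum => i _.
rewrite normrZ ger0_norm //; apply: ler_piMr => //; exact: yB.
Qed.

Lemma ext_multi (x : X) : extreme_point x -> forall n (l : 'I_n -> K) (y : 'I_n -> X),
  (forall i, 0 < l i) -> \sum_i l i = 1 -> (forall i, B (y i)) ->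
  x = \sum_i l i *: y i -> forall i, y i = x.
Proof.
move=> [xB ext] n l y l0 l1 yB xe i0.
have l0' : forall i, 0 <= l i by move=> i; apply: ltW.
have hs := l1; rewrite (bigD1 i0) //= in hs.
have he := xe; rewrite (bigD1 i0) //= in he.
have rest0 : 0 <= \sum_(i | i != i0) l i by apply: sumr_ge0.
have L1 : l i0 <= 1 by rewrite -hs lerDl.
case: (eqVneq (l i0) 1) => [L1e|L1n].
  have r0 : \sum_(i | i != i0) l i = 0 by apply/(addrI (l i0)); rewrite hs L1e addr0.
  move/eqP: r0; rewrite psumr_eq0; last by move=> i _; apply: l0'.
  move=> /allP ha.
  rewrite he L1e scale1r big1 ?addr0 // => i ii0.
  have : l i == 0.
    by have := ha i (mem_index_enum i); rewrite ii0.
  by move=> /eqP ->; rewrite scale0r.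
have L1' : l i0 < 1 by rewrite lt_neqAle L1n L1.
have d0 : 0 < 1 - l i0 by rewrite subr_gt0.
set z := \sum_(i | i != i0) (l i / (1 - l i0)) *: y i.
have hr : \sum_(i | i != i0) l i = 1 - l i0 by rewrite -hs addrAC subrr add0r.
have zB : B z.
  rewrite /B /unit_ball /=.
  have cg : forall i, 0 <= l i / (1 - l i0).
    by move=> i; apply: divr_ge0 => //; apply: ltW.
  have := @sum_ball _ (fun i => l i / (1 - l i0)) y (fun i => i != i0) cg yB.
  move=> /le_trans; apply.
  by rewrite -mulr_suml hr divff // gt_eqF.
have xz : x = l i0 *: y i0 + (1 - l i0) *: z.
  rewrite he scaler_sumr; congr (_ + _); apply: eq_bigr => i _.
  by rewrite scalerA mulrC divfK // gt_eqF.
have yz := ext (y i0) z (l i0) (yB i0) zB (introT andP (conj (l0 i0) L1')) xz.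
by rewrite xz -yz -scalerDl addrC subrK scale1r.
Qed.

Lemma canon_ball (y : X) : B y -> bidual_ball (canon_emb y).
Proof.
move=> yB; have bd : forall f r, dual_elt f -> dual_norm f r -> `|canon_emb y f| <= r.
  by move=> f r _ fr; apply: dual_norm_ub fr yB.
split => //; split; first by [].
by exists 1 => f r df fr; rewrite mul1r; apply: bd.
Qed.

Lemma bidual_multi (x : X) (I : finType) (Phi : I -> (X -> K) -> K) (l : I -> K) :
  bidual_extreme_point (canon_emb x) -> (forall i, bidual_ball (Phi i)) ->
  (forall i, 0 <= l i) -> \sum_i l i = 1 ->
  (forall f, dual_elt f -> f x = \sum_i l i * Phi i f) ->
  forall i0, 0 < l i0 -> forall f, dual_elt f -> Phi i0 f = f x.
Proof.
move=> [_ ext] Pb l0 l1 xe i0 li0.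
have hs := l1; rewrite (bigD1 i0) //= in hs.
have rest0 : 0 <= \sum_(i | i != i0) l i by apply: sumr_ge0.
have L1 : l i0 <= 1 by rewrite -hs lerDl.
case: (eqVneq (l i0) 1) => [L1e|L1n].
  have r0 : \sum_(i | i != i0) l i = 0 by apply/(addrI (l i0)); rewrite hs L1e addr0.
  move/eqP: r0; rewrite psumr_eq0; last by move=> i _; apply: l0.
  move=> /allP ha f df.
  rewrite xe // (bigD1 i0) //= L1e mul1r big1 ?addr0 // => i ii0.
  have : l i == 0.
    by have := ha i (mem_index_enum i); rewrite ii0.
  by move=> /eqP ->; rewrite mul0r.
have L1' : l i0 < 1 by rewrite lt_neqAle L1n L1.
have d0 : 0 < 1 - l i0 by rewrite subr_gt0.
have hr : \sum_(i | i != i0) l i = 1 - l i0 by rewrite -hs addrAC subrr add0r.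
have cg : forall i, 0 <= l i / (1 - l i0).
  by move=> i; apply: divr_ge0 => //; apply: ltW.
have c1 : \sum_(i | i != i0) l i / (1 - l i0) = 1 by rewrite -mulr_suml hr divff // gt_eqF.
pose Psi := fun f => \sum_(i | i != i0) (l i / (1 - l i0)) * Phi i f.
have bd : forall f r, dual_elt f -> dual_norm f r -> `|Psi f| <= r.
  move=> f r df fr; rewrite /Psi.
  apply: (le_trans (ler_norm_sum _ _ _)).
  apply: (@le_trans _ _ (\sum_(i | i != i0) (l i / (1 - l i0)) * r)).
    apply: ler_sum => i _; rewrite normrM ger0_norm //; apply: ler_wpM2l => //.
    by case: (Pb i) => _; apply.
  by rewrite -mulr_suml c1 mul1r.
have Psib : bidual_ball Psi.
  split => //; split; last by exists 1 => f r df fr; rewrite mul1r; apply: bd.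
  move=> a f g df dg; rewrite /Psi mulr_sumr -big_split /=; apply: eq_bigr => i _.
  by case: (Pb i) => [[lin _] _]; rewrite lin //; ring.
have eqx : bidual_eq (canon_emb x) (fun f => l i0 * Phi i0 f + (1 - l i0) * Psi f).
  move=> f df; rewrite /canon_emb xe // (bigD1 i0) //=; congr (_ + _).
  rewrite /Psi mulr_sumr; apply: eq_bigr => i _.
  by rewrite mulrA mulrCA divff ?gt_eqF // mulr1.
have := ext (Phi i0) Psi (l i0) (Pb i0) Psib (introT andP (conj li0 L1')) eqx.
move=> pe f df; rewrite xe // (bigD1 i0) //=.
transitivity (l i0 * Phi i0 f + (1 - l i0) * Psi f).
  by rewrite -(pe f df) -mulrDl addrC subrK mul1r.
congr (_ + _); rewrite /Psi mulr_sumr; apply: eq_bigr => i _.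
by rewrite mulrA mulrCA divff ?gt_eqF // mulr1.
Qed.

Definition WE (x : X) := forall n (l : 'I_n -> K) (y : 'I_n -> X),
  (forall i, 0 < l i) -> \sum_i l i = 1 -> (forall i, B (y i)) ->
  x = \sum_i l i *: y i -> forall i f, dual_elt f -> f (y i) = f x.

Lemma ext_WE x : extreme_point x -> WE x.
Proof. by move=> ex n l y l0 l1 yB xe i f _; rewrite (@ext_multi x ex n l y l0 l1 yB xe i). Qed.

Lemma pres_WE x : preserved_extreme_point x -> WE x.
Proof.
move=> [_ pe] n l y l0 l1 yB xe i f df.
have := @bidual_multi x _ (fun i => canon_emb (y i)) l pe (fun i => @canon_ball (y i) (yB i))
   (fun i => ltW (l0 i)) l1 _ i (l0 i) f df; apply.
by move=> g dg; rewrite xe dual_sum.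
Qed.

Lemma min_pos n (a : 'I_n -> K) : (forall i, 0 < a i) ->
  exists e, 0 < e /\ forall i, e <= a i.
Proof.
elim: n a => [|n IH] a ap; first by exists 1; split => // -[].
have [e [e0 he]] := IH (fun i => a (lift ord0 i)) (fun i => ap _).
have ar : a ord0 \is Num.real by apply: gtr0_real.
have er : e \is Num.real by apply: gtr0_real.
case/orP: (real_leVge er ar) => hle.
  exists e; split => // i; case: (unliftP ord0 i) => [j ->|->] //; exact: he.
exists (a ord0); split => // i; case: (unliftP ord0 i) => [j ->|->] //.
by apply: le_trans hle (he j).
Qed.

Lemma ccs_from_super (x : X) : unit_sphere x -> WE x -> super_Delta_point x ->
  ccs_Delta_point re x.
Proof.
move=> xs we [_ sd]; split => // C [n [l [S [lpos lsum Sl ->]]]] [y [Sy xe]].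
have xB : B x by rewrite /B /unit_ball /= xs.
have : forall i, exists p : (X -> K) * K * K, [/\ dual_elt p.1.1, dual_norm p.1.1 p.1.2,
    0 < p.2 & S i = [set z | B z /\ p.1.2 - p.2 < re (p.1.1 z)]].
  move=> i; have [[f [r [d [df dn d0 Se]]]] _] := Sl i.
  by exists (f, r, d).
move=> /choice [F hF].
have SB : forall i z, S i z -> B z by move=> i z; case: (hF i) => _ _ _ -> [].
have yB : forall i, B (y i) by move=> i; apply: SB (Sy i).
have xS : forall i, S i x.
  move=> i; have := Sy i; case: (hF i) => df _ _ Se; rewrite Se /= => -[_ h].
  by split => //; rewrite -(we n l y (fun i => proj1 (andP (lpos i))) lsum yB xe i _ df).
pose U := [set z | forall i, (F i).1.2 - (F i).2 < re ((F i).1.1 z)].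
have Uop : weakly_open U.
  move=> u Uu.
  have [e [e0 he]] := @min_pos n (fun i => re ((F i).1.1 u) - ((F i).1.2 - (F i).2))
    (fun i => ltac:(by rewrite subr_gt0; apply: Uu)).
  exists n, (fun i => (F i).1.1), e; split => //; first by move=> i; case: (hF i).
  move=> z hz i.
  have df : dual_elt (F i).1.1 by case: (hF i).
  have h1 := hz i; have h2 := he i; rewrite dualB // in h1.
  have h3 := re_ge ((F i).1.1 z - (F i).1.1 u).
  rewrite reB in h3.
  have h4 : - e < - `|(F i).1.1 z - (F i).1.1 u| by rewrite ltrN2.
  have h5 : - e < re ((F i).1.1 z) - re ((F i).1.1 u) := lt_le_trans h4 h3.
  rewrite ltrBrDr in h5.
  apply: le_lt_trans h5; rewrite (addrC (- e)) lerBrDr -lerBrDl; exact: h2.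
have Vx : (U `&` B) x by split => // i; case: (hF i) (xS i) => _ _ _ -> [].
have dV := sd (U `&` B) (ex_intro _ U (conj Uop erefl)) Vx.
apply: diam2_sub dV => //.
  move=> _ [z [hz ->]]; rewrite /B /unit_ball /=.
  have := @sum_ball n l z xpredT (fun i => ltW (proj1 (andP (lpos i)))) (fun i => SB i _ (hz i)).
  by move=> /le_trans; apply; rewrite lsum.
move=> z [Uz zB]; exists (fun _ => z); split.
  by move=> i; case: (hF i) => _ _ _ ->; split => //; apply: Uz.
by rewrite -scaler_suml lsum scale1r.
Qed.
End Part2.

Set Implicit Arguments. Unset Strict Implicit.
Definition myultra {I : Type} (U : set_system I) :=
  [/\ U setT, forall A B, U A -> U B -> U (A `&` B),
      forall A B, A `<=` B -> U A -> U B, ~ U set0 & forall A, U A \/ U (~` A)].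

Definition isulim {I : Type} {K : numFieldType} (U : set_system I) (a : I -> K) (l : K) :=
  forall e, 0 < e -> U [set i | `|a i - l| < e].

Section ULim.
Variables (K : numFieldType) (I : Type) (U : set_system I).
Hypothesis hU : myultra U.

Lemma u_ex A : U A -> exists i, A i.
Proof.
case: hU => _ _ _ n0 _ UA; apply: contrapT => ne; apply: n0.
suff -> : set0 = A by [].
by rewrite predeqE => i; split => // Ai; apply: ne; exists i.
Qed.

Lemma u_I A B : U A -> U B -> U (A `&` B).
Proof. by case: hU => _ h _ _ _; apply: h. Qed.

Lemma u_S A B : A `<=` B -> U A -> U B.
Proof. by case: hU => _ _ h _ _; apply: h. Qed.

Lemma u_T : U setT.
Proof. by case: hU. Qed.

Lemma u_ex2 A B : U A -> U B -> exists i, A i /\ B i.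
Proof. by move=> UA UB; have [i []] := u_ex (u_I UA UB); exists i. Qed.

Lemma half_gt0 (e : K) : 0 < e -> 0 < e / 2.
Proof. by move=> e0; apply: divr_gt0. Qed.

Lemma u_uniq (a : I -> K) l1 l2 : isulim U a l1 -> isulim U a l2 -> l1 = l2.
Proof.
move=> h1 h2; apply/eqP; rewrite -subr_eq0 -normr_eq0; apply/negP => /negP nz.
have d0 : 0 < `|l1 - l2| by rewrite lt_def nz normr_ge0.
have [i [i1 i2]] := u_ex2 (h1 _ (half_gt0 d0)) (h2 _ (half_gt0 d0)).
have := ler_distD (a i) l1 l2; rewrite (distrC l1 (a i)) => h.
have := lt_le_trans (ltrD i1 i2) (lexx _); rewrite -splitr => h3.
by have := le_lt_trans h h3; rewrite ltxx.
Qed.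

Lemma u_const (c : K) : isulim U (fun=> c) c.
Proof. by move=> e e0; apply: u_S u_T => i _ /=; rewrite subrr normr0. Qed.

Lemma u_add (a b : I -> K) l m : isulim U a l -> isulim U b m ->
  isulim U (fun i => a i + b i) (l + m).
Proof.
move=> ha hb e e0; apply: u_S (u_I (ha _ (half_gt0 e0)) (hb _ (half_gt0 e0))).
move=> i [/= i1 i2]; rewrite opprD addrACA.
apply: le_lt_trans (ler_normD _ _) _; rewrite [e]splitr; exact: ltrD.
Qed.

Lemma frac_lt (A e : K) : 0 <= A -> 0 < e -> A * (e / (A + 1)) < e.
Proof.
move=> A0 e0; have A1 : 0 < A + 1 by apply: ltr_wpDl.
by rewrite mulrCA gtr_pMr // ltr_pdivrMr // mul1r ltrDl.
Qed.

Lemma u_mul (a b : I -> K) l m A : 0 <= A -> (forall i, `|a i| <= A) ->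
  isulim U a l -> isulim U b m -> isulim U (fun i => a i * b i) (l * m).
Proof.
move=> A0 hA ha hb e e0.
have e2 := half_gt0 e0.
have m0 : 0 <= `|m| by [].
have q1 : 0 < e / 2 / (A + 1) by apply: divr_gt0 => //; apply: ltr_wpDl.
have q2 : 0 < e / 2 / (`|m| + 1) by apply: divr_gt0 => //; apply: ltr_wpDl.
apply: u_S (u_I (hb _ q1) (ha _ q2)) => i [/= i1 i2].
have -> : a i * b i - l * m = a i * (b i - m) + (a i - l) * m by ring.
apply: le_lt_trans (ler_normD _ _) _; rewrite [e]splitr; apply: ltr_leD.
  rewrite normrM; apply: le_lt_trans (frac_lt A0 e2).
  apply: ler_pM => //; exact: ltW.
rewrite normrM mulrC; apply: le_trans (ltW (frac_lt m0 e2)).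
by apply: ler_wpM2l => //; apply: ltW.
Qed.

Lemma u_sum (J : Type) (r : seq J) (a : J -> I -> K) (l : J -> K) :
  (forall j, isulim U (a j) (l j)) ->
  isulim U (fun i => \sum_(j <- r) a j i) (\sum_(j <- r) l j).
Proof.
move=> h; elim: r => [|j r IH].
  by rewrite big_nil; have := u_const 0; congr isulim; apply: funext => i; rewrite big_nil.
have -> : (fun i => \sum_(j0 <- j :: r) a j0 i) = (fun i => a j i + \sum_(j0 <- r) a j0 i).
  by apply: funext => i; rewrite big_cons.
by rewrite big_cons; apply: u_add.
Qed.

Lemma u_norm_le (a : I -> K) l r : isulim U a l -> U [set i | `|a i| <= r] -> `|l| <= r.
Proof.
move=> ha hr; have rr : r \is Num.real.
  have [i hi] := u_ex hr; by rewrite -(ler_real hi) normr_real.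
rewrite real_leNgt //; apply/negP => lr.
have d0 : 0 < `|l| - r by rewrite subr_gt0.
have [i [i1 i2]] := u_ex2 hr (ha _ d0).
have h : `|l| <= `|a i| + `|a i - l|.
  rewrite (distrC (a i)); apply: le_trans (ler_normD (a i) (l - a i)).
  by rewrite addrC subrK.
by have := le_lt_trans h (ler_ltD i1 i2); rewrite addrC subrK ltxx.
Qed.

Lemma u_nonneg (a : I -> K) l : isulim U a l -> (forall i, 0 <= a i) -> 0 <= l.
Proof.
move=> ha a0.
set nl := `|l|.
suff -> : l = nl by rewrite /nl.
apply/eqP; rewrite -subr_eq0 -normr_eq0; apply/negP => /negP nz.
have d0 : 0 < `|l - nl| by rewrite lt_def nz normr_ge0.
have [i [i1 _]] := u_ex2 (ha _ (half_gt0 d0)) u_T.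
have i2 : `|a i - nl| < `|l - nl| / 2.
  by rewrite /nl -{1}(ger0_norm (a0 i)); apply: le_lt_trans (ler_dist_dist _ _) i1.
have h : `|l - nl| <= `|a i - l| + `|a i - nl|.
  rewrite (distrC (a i) l); apply: le_trans (ler_normD (l - a i) (a i - nl)).
  by rewrite addrA subrK.
by have := le_lt_trans h (ltrD i1 i2); rewrite -splitr ltxx.
Qed.

Lemma u_pos (a : I -> K) l : isulim U a l -> (forall i, 0 <= a i) -> 0 < l ->
  U [set i | 0 < a i].
Proof.
move=> ha a0 l0; apply: u_S (ha _ l0) => i /= h.
have lr : l - a i \is Num.real by apply: rpredB; [apply: gtr0_real | apply: ger0_real].
have h1 := real_ler_norm lr; rewrite distrC in h.
have := le_lt_trans h1 h; rewrite ltrBlDr => h2.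
by rewrite -(ltrD2l l) addr0.
Qed.
End ULim.

Lemma ultra_from_base (I J : Type) (Bs : J -> set I) : (exists j : J, True) ->
  (forall j1 j2, exists j3, Bs j3 `<=` Bs j1 `&` Bs j2) -> (forall j, Bs j !=set0) ->
  exists U : set_system I, myultra U /\ forall j, U (Bs j).
Proof.
move=> jex dir ne.
have FF : Filter (filter_from setT Bs) by apply: filter_fromT_filter.
have PF : ProperFilter (filter_from setT Bs) by apply: filter_from_proper => j _; apply: ne.
have [G [UG sFG]] := ultraFilterLemma PF.
exists G; split; last by move=> j; apply: sFG; exists j.
have GF : ProperFilter G by case: UG.
split.
- exact: filterT.
- by move=> A B; apply: filterI.
- by move=> A B; apply: filterS.
- exact: filter_not_empty.
- by move=> A; apply: in_ultra_setVsetC.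
Qed.

Section Duals.
Variables (K : numFieldType) (X : normedModType K).

Lemma dual_zero : dual_elt (fun _ : X => (0 : K)).
Proof. by split; [move=> *; rewrite mulr0 addr0 | exists 0 => y; rewrite normr0 mul0r]. Qed.

Lemma dual_comb m (c : 'I_m -> K) (g : 'I_m -> X -> K) : (forall k, dual_elt (g k)) ->
  dual_elt (fun y => \sum_k c k * g k y).
Proof.
move=> gd; split.
  move=> a y z; rewrite mulr_sumr -big_split /=; apply: eq_bigr => k _.
  by case: (gd k) => [lin _]; rewrite lin; ring.
have : forall k, exists M, 0 <= M /\ forall y, `|g k y| <= M * `|y|.
  by move=> k; apply: dual_bound_lin.
move=> /choice [M hM].
exists (\sum_k `|c k| * M k) => y; rewrite mulr_suml.
apply: le_trans (ler_norm_sum _ _ _) _; apply: ler_sum => k _.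
by rewrite normrM -mulrA; apply: ler_wpM2l => //; case: (hM k).
Qed.

Lemma dual_scale (c : K) (g : X -> K) : dual_elt g -> dual_elt (fun y => c * g y).
Proof.
move=> gd; have := @dual_comb 1 (fun _ => c) (fun _ => g) (fun _ => gd).
by congr dual_elt; apply: funext => y; rewrite big_ord1.
Qed.

Lemma dual_lin2 (a : K) (f g : X -> K) : dual_elt f -> dual_elt g ->
  dual_elt (fun y => a * f y + g y).
Proof.
move=> df dg.
have hd : forall k : 'I_2, dual_elt (if k == ord0 then f else g) by move=> k; case: (k == ord0).
have := @dual_comb 2 (fun k => if k == ord0 then a else 1) _ hd.
by congr dual_elt; apply: funext => y; rewrite big_ord_recl big_ord1 /= mul1r.
Qed.
End Duals.

Lemma arith1 (K : numFieldType) (N S D Q t eta : K) : 0 < Q -> t = eta ^+ 2 / (2 * Q) ->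
  eta ^+ 2 / 2 <= S -> D <= Q -> 0 <= t ->
  N - 2 * t * S + t ^+ 2 * D <= N - t * eta ^+ 2 / 2.
Proof.
move=> Q0 te hS hD t0.
apply: (@le_trans _ _ (N - 2 * t * (eta ^+ 2 / 2) + t ^+ 2 * Q)).
  apply: lerD; last by apply: ler_wpM2l => //; apply: exprn_ge0.
  rewrite lerD2l lerN2; apply: ler_wpM2l => //; apply: mulr_ge0 => //.
have -> : t ^+ 2 * Q = t * eta ^+ 2 / 2.
  rewrite te; field; by rewrite gt_eqF.
have -> : 2 * t * (eta ^+ 2 / 2) = t * eta ^+ 2 by field.
have -> : N - t * eta ^+ 2 + t * eta ^+ 2 / 2 = N - t * eta ^+ 2 / 2 by field.
by [].
Qed.

Section Part1.
Variables (K : numFieldType) (re cj : K -> K) (w : 'I_4 -> K) (X : normedModType K).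
Hypothesis re_add : forall a b, re (a + b) = re a + re b.
Hypothesis re_le : forall a, re a <= `|a|.
Hypothesis re_realM : forall t a, t \is Num.real -> re (t * a) = t * re a.
Hypothesis re_cj : forall a, re (cj a * a) = `|a| ^+ 2.
Hypothesis norm_exp : forall a b t, t \is Num.real ->
  `|a - t * b| ^+ 2 = `|a| ^+ 2 - 2 * t * re (cj a * b) + t ^+ 2 * `|b| ^+ 2.
Hypothesis rot : forall z, exists j, `|z| <= 2 * re (w j * z).
Hypothesis sup_ex : forall A : set K, (exists a, A a) -> (forall a, A a -> 0 <= a) ->
  (exists M, forall a, A a -> a <= M) -> exists r, is_sup A r.
Hypothesis arch : forall a : K, a \is Num.real -> exists m : nat, a < m%:R.
Hypothesis ulim_ex : forall (I : Type) (U : set_system I), myultra U ->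
  forall (a : I -> K) (M : K), (forall i, `|a i| <= M) -> exists l, isulim U a l.
Local Notation B := (@unit_ball K X).

Lemma re0' : re 0 = 0.
Proof. by apply/esym/(addrI (re 0)); rewrite -re_add !addr0. Qed.
Lemma reN' a : re (- a) = - re a.
Proof. by apply/(addrI (re a)); rewrite -re_add !subrr re0'. Qed.
Lemma reB' a b : re (a - b) = re a - re b.
Proof. by rewrite re_add reN'. Qed.
Lemma re_real' a : re a \is Num.real.
Proof. by rewrite (ler_real (re_le a)) normr_real. Qed.
Lemma re_sum (J : Type) (r : seq J) (F : J -> K) : re (\sum_(j <- r) F j) = \sum_(j <- r) re (F j).
Proof. by elim: r => [|j r IH]; rewrite ?big_nil ?re0' // !big_cons re_add IH. Qed.

Section Core.
Variables (x : X) (n : nat) (f : 'I_n -> X -> K) (eps : K).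
Hypotheses (xB : B x) (fd : forall i, dual_elt (f i)) (eps0 : 0 < eps).
Definition PT := ('I_n * 'I_4)%type.
Definition hp (p : PT) : X -> K := fun y => w p.2 * f p.1 y.
Definition Pc (p : PT) (y : X) := B y /\ re (hp p x) + eps / 2 <= re (hp p y).
Hypothesis star : forall h, dual_elt h -> forall tau, 0 < tau ->
  exists p y, Pc p y /\ re (h x) - tau < re (h y).

Definition valid (lam : PT -> K) (ys : PT -> X) :=
  [/\ forall p, 0 <= lam p, \sum_p lam p = 1, forall p, B (ys p) &
      forall p, lam p = 0 \/ Pc p (ys p)].
Definition vv (g : X -> K) (lam : PT -> K) (ys : PT -> X) := \sum_p lam p * g (ys p).

Lemma hp_dual p : dual_elt (hp p).
Proof. exact: dual_scale. Qed.

Lemma Pc_conv p a b y y' : 0 <= a -> 0 <= b -> (a = 0 \/ Pc p y) -> (b = 0 \/ Pc p y') ->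
  B y -> B y' -> exists z, [/\ B z, (a + b = 0 \/ Pc p z) &
    forall g, dual_elt g -> (a + b) * g z = a * g y + b * g y'].
Proof.
move=> a0 b0 ha hb yB y'B.
case: (eqVneq a 0) => [-> | an].
  by exists y'; split => //; [rewrite add0r | move=> g _; rewrite add0r mul0r add0r].
case: (eqVneq b 0) => [-> | bn].
  by exists y; split => //; [rewrite addr0 | move=> g _; rewrite addr0 mul0r addr0].
have Py : Pc p y by case: ha => // /eqP; rewrite (negbTE an).
have Py' : Pc p y' by case: hb => // /eqP; rewrite (negbTE bn).
have ap : 0 < a by rewrite lt_def an.
have bp : 0 < b by rewrite lt_def bn.
have s0 : 0 < a + b by apply: addr_gt0.
have c1 : 0 <= a / (a + b) by apply: divr_ge0 => //; apply: ltW.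
have c2 : 0 <= b / (a + b) by apply: divr_ge0 => //; apply: ltW.
have c12 : a / (a + b) + b / (a + b) = 1 by rewrite -mulrDl divff // gt_eqF.
set z := a / (a + b) *: y + b / (a + b) *: y'.
have zB : B z.
  rewrite /B /unit_ball /=; apply: le_trans (ler_normD _ _) _.
  rewrite !normrZ !ger0_norm // -c12; apply: lerD; apply: ler_piMr => //.
have gz : forall g, dual_elt g -> (a + b) * g z = a * g y + b * g y'.
  move=> g dg; rewrite dualD // !dualZ //; field; by rewrite gt_eqF.
exists z; split => //; right; split => //.
have dfp := fd p.1.
rewrite /hp dualD // !dualZ // mulrDr re_add.
rewrite (mulrCA (w p.2) (a / (a + b))) (mulrCA (w p.2) (b / (a + b))).
rewrite (re_realM _ (ger0_real c1)) (re_realM _ (ger0_real c2)).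
case: Py => _ h1; case: Py' => _ h2; rewrite /hp in h1 h2.
have := lerD (ler_wpM2l c1 h1) (ler_wpM2l c2 h2).
move=> hh; apply: le_trans hh.
by rewrite -mulrDl c12 mul1r.
Qed.




Lemma vv_bound g M lam ys : (forall y, B y -> `|g y| <= M) -> valid lam ys ->
  `|vv g lam ys| <= M.
Proof.
move=> hg [l0 l1 yB _]; rewrite /vv.
apply: le_trans (ler_norm_sum _ _ _) _.
apply: (@le_trans _ _ (\sum_p lam p * M)); last by rewrite -mulr_suml l1 mul1r.
apply: ler_sum => p _; rewrite normrM ger0_norm //; apply: ler_wpM2l => //; exact: hg.
Qed.

Lemma valid_point p y : Pc p y -> valid (fun q => if q == p then 1 else 0) (fun _ => y).
Proof.
move=> Py; split.
- by move=> q; case: (q == p).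
- by rewrite (bigD1 p) //= eqxx big1 ?addr0 // => q /negbTE ->.
- by move=> _; case: Py.
- by move=> q; case: eqP => [-> | _]; [right | left].
Qed.

Lemma vv_point g p y : vv g (fun q => if q == p then 1 else 0) (fun _ => y) = g y.
Proof.
by rewrite /vv (bigD1 p) //= eqxx mul1r big1 ?addr0 // => q /negbTE ->; rewrite mul0r.
Qed.

Lemma approx m (g : 'I_m -> X -> K) : (forall k, dual_elt (g k)) ->
  forall eta, 0 < eta -> exists lam ys, valid lam ys /\
    forall k, `|g k x - vv (g k) lam ys| < eta.
Proof.
move=> gd eta eta0; apply: contrapT => nH.
have etar : eta \is Num.real by apply: gtr0_real.
have H : forall lam ys, valid lam ys -> exists k, eta <= `|g k x - vv (g k) lam ys|.
  move=> lam ys v; apply: contrapT => nk; apply: nH; exists lam, ys; split => // k.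
  rewrite real_ltNge ?normr_real //; apply/negP => h; apply: nk; exists k; exact: h.
have : forall k, exists M, 0 <= M /\ forall y, B y -> `|g k y| <= M.
  by move=> k; apply: dual_bound.
move=> /choice [Mg hMg].
pose N lam ys := \sum_k `|g k x - vv (g k) lam ys| ^+ 2.
have N0 : forall lam ys, 0 <= N lam ys.
  by move=> lam ys; apply: sumr_ge0 => k _; apply: exprn_ge0.
have Nbig : forall lam ys, valid lam ys -> eta ^+ 2 <= N lam ys.
  move=> lam ys v; have [k hk] := H lam ys v.
  rewrite /N (bigD1 k) //= -[eta ^+ 2]addr0; apply: lerD.
    by rewrite !expr2; apply: ler_pM => //; apply: ltW.
  by apply: sumr_ge0 => j _; apply: exprn_ge0.
pose Q := \sum_k (2 * Mg k) ^+ 2 + eta ^+ 2.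
have Mg0 : forall k, 0 <= 2 * Mg k by move=> k; apply: mulr_ge0; [rewrite ler0n | case: (hMg k)].
have Qs0 : 0 <= \sum_k (2 * Mg k) ^+ 2 by apply: sumr_ge0 => k _; apply: exprn_ge0.
have e2 : 0 < eta ^+ 2 by apply: exprn_gt0.
have Q0 : 0 < Q by apply: ltr_wpDl.
pose t := eta ^+ 2 / (2 * Q).
have two0 : (0 : K) < 2 by rewrite ltr0n.
have Q2 : 0 < 2 * Q := mulr_gt0 two0 Q0.
have t0 : 0 <= t by apply: divr_ge0; apply: ltW.
have t1 : t <= 1.
  rewrite /t ler_pdivrMr // mul1r.
  rewrite /Q mulrDr; apply: ler_wpDl.
    by apply: mulr_ge0 => //; apply: ltW.
  by rewrite mulr2n mulrDl mul1r lerDr; apply: ltW.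
pose kap := t * eta ^+ 2 / 2.
have step : forall lam ys, valid lam ys ->
    exists lam2 ys2, valid lam2 ys2 /\ N lam2 ys2 <= N lam ys - kap.
  move=> lam ys v.
  pose u k := g k x - vv (g k) lam ys.
  pose h := fun y => \sum_k cj (u k) * g k y.
  have hd : dual_elt h := dual_comb (fun k => cj (u k)) gd.
  have tau0 : 0 < eta ^+ 2 / 2 by apply: divr_gt0.
  have [p1 [y1 [P1 hy1]]] := star hd tau0.
  pose lam1 := fun q : PT => if q == p1 then (1 : K) else 0.
  have v1 : valid lam1 (fun _ => y1) := valid_point P1.
  have y1B : B y1 by case: P1.
  have t1' : 0 <= 1 - t by rewrite subr_ge0.
  have : forall p, exists z, [/\ B z, ((1 - t) * lam p + t * lam1 p = 0 \/ Pc p z) &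
      forall g, dual_elt g -> ((1 - t) * lam p + t * lam1 p) * g z =
        (1 - t) * lam p * g (ys p) + t * lam1 p * g y1].
    move=> p; case: v => l0 _ yB lP; case: v1 => l10 _ _ l1P; apply: Pc_conv => //.
    - exact: mulr_ge0.
    - exact: mulr_ge0.
    - by case: (lP p) => [->|]; [left; rewrite mulr0 | right].
    - by case: (l1P p) => [->|]; [left; rewrite mulr0 | right].
  move=> /choice [zs hz].
  pose lam2 := fun p => (1 - t) * lam p + t * lam1 p.
  have v2 : valid lam2 zs.
    case: v => l0 ls _ _; case: v1 => l10 l1s _ _; split.
    - by move=> p; apply: addr_ge0; apply: mulr_ge0.
    - by rewrite /lam2 big_split /= -!mulr_sumr ls l1s !mulr1 subrK.
    - by move=> p; case: (hz p).
    - by move=> p; case: (hz p).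
  have vv2 : forall k, vv (g k) lam2 zs = (1 - t) * vv (g k) lam ys + t * g k y1.
    move=> k; rewrite /vv.
    transitivity (\sum_p ((1 - t) * (lam p * g k (ys p)) + t * (lam1 p * g k y1))).
      by apply: eq_bigr => p _; case: (hz p) => _ _ ->; rewrite ?(gd k) // !mulrA.
    rewrite big_split /= -!mulr_sumr; congr (_ + _).
    by congr (_ * _); exact: (vv_point (g k) p1 y1).
  exists lam2, zs; split => //.
  pose d k := g k y1 - vv (g k) lam ys.
  have e2k : forall k, g k x - vv (g k) lam2 zs = u k - t * d k.
    by move=> k; rewrite vv2 /u /d; ring.
  have tr : t \is Num.real by apply: ger0_real.
  have -> : N lam2 zs = N lam ys - 2 * t * (\sum_k re (cj (u k) * d k)) +
      t ^+ 2 * (\sum_k `|d k| ^+ 2).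
    rewrite /N; under eq_bigr => k _ do rewrite e2k norm_exp //.
    rewrite !big_split /= sumrN -!mulr_sumr; congr (_ - _ + _).
  have := @arith1 K (N lam ys) (\sum_k re (cj (u k) * d k)) (\sum_k `|d k| ^+ 2) Q t eta Q0 (erefl t).
  move=> hA; apply: hA => //.
    have -> : \sum_k re (cj (u k) * d k) = (re (h y1) - re (h x)) + N lam ys.
      rewrite /h !re_sum -sumrB -big_split /=; apply: eq_bigr => k _.
      have -> : cj (u k) * d k = cj (u k) * g k y1 - cj (u k) * g k x + cj (u k) * u k.
        by rewrite /d /u; ring.
      by rewrite re_add reB' re_cj.
    have hN := Nbig lam ys v.
    have h3 : - (eta ^+ 2 / 2) < re (h y1) - re (h x) by rewrite ltrBrDl.
    apply: le_trans (lerD (ltW h3) hN).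
    have -> : - (eta ^+ 2 / 2) + eta ^+ 2 = eta ^+ 2 / 2 by field.
    by [].
  apply: (@le_trans _ _ (\sum_k (2 * Mg k) ^+ 2)); last by rewrite lerDl ltW.
  apply: ler_sum => k _.
  have hd2 : `|d k| <= 2 * Mg k.
    have [_ hM] := hMg k.
    apply: le_trans (ler_normB _ _) _; rewrite mulr2n mulrDl mul1r; apply: lerD.
      exact: hM.
    by apply: vv_bound.
  by rewrite !expr2; apply: ler_pM.
have [p0 [y0 [P0 _]]] := star (@dual_zero K X) ltr01.
pose lam0 := fun q : PT => if q == p0 then (1 : K) else 0.
have v0 : valid lam0 (fun _ => y0) := valid_point P0.
have iter : forall m : nat, exists lam ys, valid lam ys /\
    N lam ys <= N lam0 (fun _ => y0) - m%:R * kap.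
  elim => [|mm [lm [yss [hv hN]]]]; first by exists lam0, (fun _ => y0); rewrite mul0r subr0.
  have [lam2 [ys2 [v2 hN2]]] := step lm yss hv.
  exists lam2, ys2; split => //; apply: le_trans hN2 _.
  by rewrite -natr1 mulrDl mul1r opprD addrA lerD2r.
have kap0 : 0 < kap.
  apply: divr_gt0 => //; apply: mulr_gt0 => //; apply: divr_gt0 => //.
have Nr : N lam0 (fun _ => y0) / kap \is Num.real.
  by apply: ger0_real; apply: divr_ge0; [apply: N0 | apply: ltW].
have [mm hm] := arch Nr.
have [lm [yss [hv hN]]] := iter mm.
have := le_trans (N0 lm yss) hN.
rewrite subr_ge0 -ler_pdivlMr //.
by move=> hh; have := le_lt_trans hh hm; rewrite ltxx.
Qed.


Lemma u_re_ge (I : Type) (U : set_system I) (a : I -> K) l c : myultra U ->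
  isulim U a l -> U [set i | c <= re (a i)] -> c <= re l.
Proof.
move=> hU ha hc; have [i0 hi0] := u_ex hU hc.
have cr : c \is Num.real by rewrite (ler_real hi0) re_real'.
rewrite real_leNgt ?re_real' //; apply/negP => lc.
have d0 : 0 < c - re l by rewrite subr_gt0.
have [i [i1 i2]] := u_ex2 hU hc (ha _ d0).
have h := re_le (a i - l); rewrite reB' in h.
have := le_lt_trans h i2; rewrite ltrD2r => h3.
by have := le_lt_trans i1 h3; rewrite ltxx.
Qed.

Lemma lam_le1 lam ys p : valid lam ys -> `|lam p| <= 1.
Proof.
move=> [l0 l1 _ _]; rewrite ger0_norm // -l1 (bigD1 p) //= lerDl.
by apply: sumr_ge0.
Qed.

Lemma core_false : bidual_extreme_point (canon_emb x) -> False.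
Proof.
move=> pe.
pose Ix := (seq (X -> K) * nat)%type.
pose gd (g : X -> K) := if `[< dual_elt g >] then g else (fun _ : X => 0 : K).
have gdd : forall g, dual_elt (gd g).
  by move=> g; rewrite /gd; case: (asboolP (dual_elt g)) => // _; apply: dual_zero.
have gdE : forall g, dual_elt g -> gd g = g.
  by move=> g dg; rewrite /gd; case: (asboolP (dual_elt g)).
pose d0 := fun _ : X => (0 : K).
pose gf (i : Ix) : 'I_(size i.1) -> X -> K := fun k => gd (nth d0 i.1 k).
have : forall i : Ix, exists c : (PT -> K) * (PT -> X), valid c.1 c.2 /\
    forall k, `|gf i k x - vv (gf i k) c.1 c.2| < 1 / (i.2.+1)%:R.
  move=> i; have [lam [ys [v h]]] := @approx (size i.1) (gf i) (fun k => gdd _) _ (divr_gt0 ltr01 (ltr0Sn _ i.2)).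
  by exists (lam, ys).
move=> /choice [cfg hcfg].
pose incl (G0 G : seq (X -> K)) := forall k, (k < size G0)%N ->
  exists k', (k' < size G)%N /\ nth d0 G k' = nth d0 G0 k.
pose Bs (j : Ix) := [set i : Ix | incl j.1 i.1 /\ (j.2 <= i.2)%N].
have [U [hU hUB]] : exists U : set_system Ix, myultra U /\ forall j, U (Bs j).
  apply: ultra_from_base; first by exists ([::], 0%N).
    move=> j1 j2; exists (j1.1 ++ j2.1, maxn j1.2 j2.2) => i [hi hk] /=.
    split; split.
    - move=> k hk1.
      have hk1' : (k < size (j1.1 ++ j2.1))%N by rewrite size_cat; apply: ltn_addr.
      have [k' [hk' e]] := hi k hk1'.
      by exists k'; split => //; rewrite e nth_cat hk1.
    - exact: leq_trans (leq_maxl _ _) hk.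
    - move=> k hk1.
      have hk2 : (size j1.1 + k < size (j1.1 ++ j2.1))%N by rewrite size_cat ltn_add2l.
      have [k' [hk' e]] := hi _ hk2.
      by exists k'; split => //; rewrite e nth_cat ltnNge leq_addr /= addKn.
    - exact: leq_trans (leq_maxr _ _) hk.
  move=> j; exists j; split => //; move=> k hk; by exists k.
have key : forall g, dual_elt g ->
    isulim U (fun i => vv g (cfg i).1 (cfg i).2) (g x).
  move=> g dg e e0.
  have er : e^-1 \is Num.real by apply: gtr0_real; rewrite invr_gt0.
  have [k0 hk0] := arch er.
  apply: (u_S hU _ (hUB ([:: g], k0))) => i [hin hk].
  have [k' [hk' ek]] := hin 0%N (ltn0Sn _).
  have := (hcfg i).2 (Ordinal hk'); rewrite /gf /= ek /= gdE // => h.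
  rewrite /= distrC; apply: lt_le_trans h _.
  rewrite div1r -[e]invrK lef_pV2 ?posrE ?invr_gt0 ?ltr0Sn //.
  apply: ltW; apply: lt_le_trans hk0 _; rewrite ler_nat; exact: leqW.
have lex : forall p, exists l, isulim U (fun i => (cfg i).1 p) l.
  by move=> p; apply: (ulim_ex hU (M := 1)) => i; apply: lam_le1 (hcfg i).1.
have : forall p, exists l, isulim U (fun i => (cfg i).1 p) l := lex.
move=> /choice [lamL hlam].
pose Phi (p : PT) (g : X -> K) := xget 0 [set l | isulim U (fun i => g ((cfg i).2 p)) l].
have hPhi : forall p g, dual_elt g -> isulim U (fun i => g ((cfg i).2 p)) (Phi p g).
  move=> p g dg; apply: xgetPex; have [M [M0 hM]] := @dual_bound K X g dg.
  apply: (ulim_ex hU (M := M)) => i; apply: hM.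
  by case: (hcfg i) => -[].
have Phib : forall p, bidual_ball (Phi p).
  move=> p.
  have bd : forall f r, dual_elt f -> dual_norm f r -> `|Phi p f| <= r.
    move=> f1 r df fr; apply: (u_norm_le hU (hPhi p f1 df)).
    apply: (u_S hU _ (u_T hU)) => i _ /=; apply: (@dual_norm_ub K X f1 r _ fr).
    by case: (hcfg i) => -[].
  split => //; split; last by exists 1 => f1 r df fr; rewrite mul1r; apply: bd.
  move=> a f1 g df dg.
  have h1 := hPhi p _ (dual_lin2 a df dg).
  have h2 : isulim U (fun i => a * f1 ((cfg i).2 p) + g ((cfg i).2 p)) (a * Phi p f1 + Phi p g).
    apply: (u_add hU _ (hPhi p g dg)).
    by apply: (u_mul hU (A := `|a|) _ _ (u_const hU a) (hPhi p f1 df)).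
  by apply: (u_uniq hU h1).
have l0 : forall p, 0 <= lamL p.
  by move=> p; apply: (u_nonneg hU (hlam p)) => i; case: (hcfg i) => -[].
have l1 : \sum_p lamL p = 1.
  have h1 := u_sum hU (index_enum PT) hlam.
  have h2 : isulim U (fun i => \sum_(p <- index_enum PT) (cfg i).1 p) 1.
    have -> : (fun i => \sum_(p <- index_enum PT) (cfg i).1 p) = (fun _ => 1).
      by apply: funext => i; case: (hcfg i) => -[].
    exact: u_const.
  by apply: (u_uniq hU h1).
have eqx : forall g, dual_elt g -> g x = \sum_p lamL p * Phi p g.
  move=> g dg.
  have h1 := key g dg.
  have h2 : isulim U (fun i => vv g (cfg i).1 (cfg i).2) (\sum_p lamL p * Phi p g).
    apply: (u_sum hU (index_enum PT)) => p.
    apply: (u_mul hU (A := 1) _ _ (hlam p) (hPhi p g dg)) => // i.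
    exact: lam_le1 (hcfg i).1.
  by apply: (u_uniq hU h1).
have [p0 lp0] : exists p, 0 < lamL p.
  apply: contrapT => nx.
  have : \sum_p lamL p = 0.
    apply: big1 => p _; apply/eqP; rewrite eq_le l0 andbT.
    rewrite real_leNgt ?ger0_real //; apply/negP => h; apply: nx; exists p; exact h.
  by rewrite l1 => /eqP; rewrite oner_eq0.
have e1 := @bidual_multi K X x PT Phi lamL pe Phib l0 l1 eqx p0 lp0 (hp p0) (hp_dual p0).
have hc : U [set i | re (hp p0 x) + eps / 2 <= re (hp p0 ((cfg i).2 p0))].
  apply: (u_S hU _ (u_pos hU (hlam p0) _ lp0)); last by move=> i; case: (hcfg i) => -[].
  move=> i /= hi; case: (hcfg i) => -[_ _ _ h4] _.
  by case: (h4 p0) => [e|[]//]; move: hi; rewrite e ltxx.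
have := u_re_ge hU (hPhi p0 _ (hp_dual p0)) hc; rewrite e1 gerDl.
have : 0 < eps / 2 by apply: divr_gt0.
by move=> h1 h2; have := lt_le_trans h1 h2; rewrite ltxx.
Qed.
End Core.


Lemma part1 (x : X) : unit_sphere x -> preserved_extreme_point x -> Delta_point re x ->
  super_Delta_point x.
Proof.
move=> xs [_ pe] [_ D]; split => // V [U [Uop ->]] [Ux xB].
apply: diam2I; [exact: xB | by move=> y [] | ].
move=> s sr s2; apply: contrapT => nex.
have far : forall y, B y -> U y -> `|x - y| <= s.
  move=> y yB Uy; rewrite real_leNgt ?normr_real //; apply/negP => h.
  by apply: nex; exists y; split.
have [n [f [eps [fd eps0 sub]]]] := Uop x Ux.
apply: (@core_false x n f eps fd eps0 _ pe).
move=> h dh tau tau0.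
have [r hr] : exists r, dual_norm h r.
  apply: sup_ex; first by exists `|h x|, x.
    by move=> _ [y _ <-].
  have [M [M0 hM]] := @dual_bound K X h dh.
  by exists M => _ [y yB <-]; apply: hM.
have hxr : re (h x) <= r.
  apply: le_trans (re_le _) _; exact: (@dual_norm_ub K X h r x hr xB).
pose del := r - re (h x) + tau.
have del0 : 0 < del by rewrite /del; apply: ltr_wpDl => //; rewrite subr_ge0.
pose S := [set y | B y /\ r - del < re (h y)].
have rd : r - del = re (h x) - tau by rewrite /del; ring.
have Sx : S x by split => //; rewrite rd gtrBl.
have sS : slice re S by split; [exists h, r, del | exists x].
have [y [[yB hy] sy]] := is_sup_gt _ _ (D S sS Sx) sr s2.
have : ~ (forall i, `|f i (y - x)| < eps).
  by move=> hall; have := lt_le_trans sy (far y yB (sub y hall)); rewrite ltxx.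
move=> /existsNP [i hi].
have hi' : eps <= `|f i (y - x)|.
  by rewrite real_leNgt ?normr_real ?gtr0_real //; apply/negP.
have [j hj] := rot (f i (y - x)).
exists (i, j), y; split; last by rewrite -rd.
split => //; rewrite /hp /=.
have -> : w j * f i y = w j * f i x + w j * f i (y - x).
  by rewrite dualB // mulrBr addrC subrK.
rewrite re_add lerD2l.
have two0 : (0 : K) < 2 by rewrite ltr0n.
rewrite ler_pdivrMr // mulrC; apply: le_trans hi' hj.
Qed.

End Part1.

Section RealInst.
Variable R : realType.

Definition wR (j : 'I_4) : R := if (j : nat) == 0%N then 1 else -1.

Lemma R_re_le (a : R) : id a <= `|a|.
Proof. exact: ler_norm. Qed.

Lemma R_cj (a : R) : id (id a * a) = `|a| ^+ 2.
Proof. by rewrite real_normK ?num_real // expr2. Qed.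

Lemma R_norm_exp (a b t : R) : t \is Num.real ->
  `|a - t * b| ^+ 2 = `|a| ^+ 2 - 2 * t * id (id a * b) + t ^+ 2 * `|b| ^+ 2.
Proof. by move=> _; rewrite !real_normK ?num_real //=; ring. Qed.

Lemma R_rot (z : R) : exists j, `|z| <= 2 * id (wR j * z).
Proof.
case: (leP 0 z) => hz.
  by exists ord0; rewrite /wR /= mul1r ger0_norm //; lra.
exists (Ordinal (erefl : (1 < 4)%N)); rewrite /wR /= mulN1r ltr0_norm //; lra.
Qed.

Lemma R_sup (A : set R) : (exists a, A a) -> (forall a, A a -> 0 <= a) ->
  (exists M, forall a, A a -> a <= M) -> exists r, is_sup A r.
Proof.
move=> [a Aa] _ [M hM].
have hs : has_sup A by split; [exists a | exists M => b Ab; apply: hM].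
exists (sup A); split; first by move=> b Ab; apply: sup_upper_bound.
by move=> s hs'; apply: ge_sup; [exists a | move=> b Ab; apply: hs'].
Qed.

Lemma R_arch (a : R) : a \is Num.real -> exists m : nat, a < m%:R.
Proof.
move=> _; exists (Num.Def.archi_bound `|a|).
by apply: le_lt_trans (ler_norm a) (archi_boundP (normr_ge0 a)).
Qed.

Lemma R_ulim (I : Type) (U : set_system I) : myultra U ->
  forall (a : I -> R) (M : R), (forall i, `|a i| <= M) -> exists l, isulim U a l.
Proof.
move=> hU a M hM.
pose E := [set t : R | U [set i | t <= a i]].
have hE : E (- M).
  apply: (u_S hU _ (u_T hU)) => i _ /=.
  by have := hM i; rewrite ler_norml => /andP [].
have Eub : forall t, E t -> t <= M.
  move=> t Et; rewrite leNgt; apply/negP => Mt.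
  have [i hi] := u_ex hU Et.
  have := hM i; rewrite ler_norml => /andP [_ h].
  by have := lt_le_trans (le_lt_trans h Mt) hi; rewrite ltxx.
have hs : has_sup E by split; [exists (- M) | exists M => t Et; apply: Eub].
exists (sup E) => e e0.
have [t Et ht] := sup_adherent e0 hs.
have h1 : U [set i | sup E - e < a i].
  by apply: (u_S hU _ Et) => i /= hi; apply: lt_le_trans ht hi.
have h2 : U [set i | a i < sup E + e].
  case: (hU) => _ _ _ _ /(_ [set i | sup E + e <= a i]) [h|h].
    have := sup_upper_bound hs h; rewrite gerDl => h3.
    by have := lt_le_trans e0 h3; rewrite ltxx.
  by apply: (u_S hU _ h) => i /= /negP; rewrite -ltNge.
apply: (u_S hU _ (u_I hU h1 h2)) => i [/= i1 i2].
rewrite ltr_norml; apply/andP; split; lra.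
Qed.
End RealInst.

Section ComplexInst.
Variable R : realType.
Local Notation C := R[i].

Definition wC (j : 'I_4) : C :=
  if (j : nat) == 0%N then 1 else if (j : nat) == 1%N then -1
  else if (j : nat) == 2%N then - 'i else 'i.

Lemma C_re_add (a b : C) : 'Re (a + b) = 'Re a + 'Re b.
Proof. by rewrite raddfD. Qed.

Lemma C_re_le (a : C) : 'Re a <= `|a|.
Proof. exact: (leif_Re_Creal a).1. Qed.

Lemma C_re_realM (t a : C) : t \is Num.real -> 'Re (t * a) = t * 'Re a.
Proof. by move=> ht; rewrite ReMl. Qed.

Lemma C_re_cj (a : C) : 'Re (a^* * a) = `|a| ^+ 2.
Proof. by rewrite -normCKC; apply/Creal_ReP; apply: rpredX; apply: normr_real. Qed.

Lemma C_norm_exp (a b t : C) : t \is Num.real ->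
  `|a - t * b| ^+ 2 = `|a| ^+ 2 - 2 * t * 'Re (a^* * b) + t ^+ 2 * `|b| ^+ 2.
Proof.
move=> /CrealP ht.
have c1 : (a - t * b)^* = a^* - t * b^*.
  by rewrite rmorphB rmorphM; congr (_ - _ * _); exact: ht.
have c2 : (a^* * b)^* = a * b^*.
  by rewrite rmorphM; congr (_ * _); exact: conjCK.
by rewrite !normCKC ReE c1 c2; field.
Qed.

Lemma C_rot (z : C) : exists j, `|z| <= 2 * 'Re (wC j * z).
Proof.
have ar : 'Re z \is Num.real := Creal_Re z.
have br : 'Im z \is Num.real := Creal_Im z.
have hz : `|z| <= `|'Re z| + `|'Im z|.
  rewrite {1}[z]Crect; apply: le_trans (ler_normD _ _) _.
  by rewrite normrM normCi mul1r.
have key : forall c, `|'Re z| <= c -> `|'Im z| <= c -> `|z| <= 2 * c.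
  move=> c h1 h2; apply: le_trans hz _.
  have -> : 2 * c = c + c by ring.
  exact: lerD.
case/orP: (real_leVge (normr_real ('Im z)) (normr_real ('Re z))) => hab.
  case/orP: (real_leVge (real0 _) ar) => ha.
    exists ord0; rewrite /wC /= mul1r; apply: key; first by rewrite ger0_norm.
    by rewrite -(ger0_norm ha).
  have e1 : 'Re (-1 * z) = - 'Re z.
    by rewrite mulN1r; exact: raddfN.
  exists (Ordinal (erefl : (1 < 4)%N)); rewrite /wC /= e1.
  by apply: key; rewrite -(ler0_norm ha) //.
case/orP: (real_leVge (real0 _) br) => hb.
  have e2 : 'Re (- 'i * z) = 'Im z.
    by rewrite mulNr; transitivity (- 'Re ('i * z)); [exact: raddfN | rewrite ReMil opprK].
  exists (Ordinal (erefl : (2 < 4)%N)); rewrite /wC /= e2.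
  by apply: key; [rewrite -(ger0_norm hb) | rewrite ger0_norm].
exists (Ordinal (erefl : (3 < 4)%N)); rewrite /wC /= ReMil.
by apply: key; rewrite -(ler0_norm hb).
Qed.


Lemma normcR (k : R) : `|k%:C%C| = `|k|%:C%C.
Proof. by rewrite normc_def /= expr0n addr0 sqrtr_sqr. Qed.

Lemma real_C (a : C) : a \is Num.real -> a = (complex.Re a)%:C%C.
Proof. by move=> ar; rewrite RRe_real. Qed.

Lemma C_sup (A : set C) : (exists a, A a) -> (forall a, A a -> 0 <= a) ->
  (exists M, forall a, A a -> a <= M) -> exists r, is_sup A r.
Proof.
move=> [a0 Aa0] A0 [M hM].
pose A' := [set t : R | A t%:C%C].
have Ar : forall a, A a -> a = (complex.Re a)%:C%C.
  by move=> a Aa; apply: real_C; apply: ger0_real; apply: A0.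
have MR : M \is Num.real by rewrite -(ler_real (hM _ Aa0)) ger0_real ?A0.
have hs : has_sup A'.
  split; first by exists (complex.Re a0); rewrite /A' /= -Ar.
  exists (complex.Re M) => t At; rewrite -lecR -real_C //; exact: hM.
exists (sup A')%:C%C; split.
  move=> a Aa; rewrite (Ar a Aa) lecR; apply: sup_upper_bound => //.
  by rewrite /A' /= -Ar.
move=> u hu.
have ur : u \is Num.real by rewrite -(ler_real (hu _ Aa0)) ger0_real ?A0.
rewrite (real_C ur) lecR; apply: ge_sup; first by case: hs.
by move=> t At; rewrite -lecR -real_C //; apply: hu.
Qed.

Lemma C_arch (a : C) : a \is Num.real -> exists m : nat, a < m%:R.
Proof.
move=> ar; have [m hm] := R_arch (num_real (complex.Re a)).
by exists m; rewrite (real_C ar) -(rmorph_nat (real_complex R)) ltcR.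
Qed.


Lemma normci : `|'i%C : C| = 1.
Proof. by rewrite normc_def /= expr0n add0r expr1n sqrtr1. Qed.

Lemma C_ulim (I : Type) (U : set_system I) : myultra U ->
  forall (a : I -> C) (M : C), (forall i, `|a i| <= M) -> exists l, isulim U a l.
Proof.
move=> hU a M hM.
have [i0 _] := u_ex hU (u_T hU).
have MR : M \is Num.real by rewrite -(ler_real (hM i0)) normr_real.
have hRe : forall i, `|complex.Re (a i)| <= complex.Re M.
  move=> i; rewrite -lecR -real_C //; apply: le_trans (normc_ge_Re _) (hM i).
have hIm : forall i, `|complex.Im (a i)| <= complex.Re M.
  move=> i; rewrite -lecR -real_C //; apply: le_trans _ (hM i).
  have := normc_ge_Re (a i * 'i%C); rewrite ReiNIm normrN normrM normci mulr1.
  by [].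
have [l1 h1] := R_ulim hU hRe.
have [l2 h2] := R_ulim hU hIm.
exists (l1%:C%C + 'i%C * l2%:C%C) => e e0.
have er : e \is Num.real by apply: gtr0_real.
have e0' : 0 < complex.Re e by rewrite -ltcR -real_C.
have e2 : 0 < complex.Re e / 2 by apply: divr_gt0.
apply: (u_S hU _ (u_I hU (h1 _ e2) (h2 _ e2))) => i [/= i1 i2].
have -> : a i - (l1%:C%C + 'i%C * l2%:C%C) =
    (complex.Re (a i) - l1)%:C%C + 'i%C * (complex.Im (a i) - l2)%:C%C.
  by rewrite {1}(complexE (a i)) !rmorphB; ring.
apply: le_lt_trans (ler_normD _ _) _; rewrite normrM normci mul1r !normcR.
rewrite -rmorphD (real_C er) ltcR; lra.
Qed.

End ComplexInst.

Theorem mainTheorem3 (R : realType) :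
  (forall (X : completeNormedModType R) (x : X), unit_sphere x ->
     [/\ (preserved_extreme_point x /\ Delta_point id x -> super_Delta_point x),
         (extreme_point x /\ super_Delta_point x -> ccs_Delta_point id x) &
         (preserved_extreme_point x /\ Delta_point id x ->
            super_Delta_point x /\ ccs_Delta_point id x)]) /\
  (forall (X : completeNormedModType R[i]) (x : X), unit_sphere x ->
     [/\ (preserved_extreme_point x /\ Delta_point (fun z : R[i] => 'Re z) x ->
            super_Delta_point x),
         (extreme_point x /\ super_Delta_point x ->
            ccs_Delta_point (fun z : R[i] => 'Re z) x) &
         (preserved_extreme_point x /\ Delta_point (fun z : R[i] => 'Re z) x ->
            super_Delta_point x /\ ccs_Delta_point (fun z : R[i] => 'Re z) x)]).
Proof.
split.
- move=> X x xs.
  have p1 : preserved_extreme_point x /\ Delta_point id x -> super_Delta_point x.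
    move=> [pe D].
    exact: (@part1 R id id (@wR R) X (fun a b => erefl) (@R_re_le R)
      (fun t a _ => erefl) (@R_cj R) (@R_norm_exp R) (@R_rot R) (@R_sup R)
      (@R_arch R) (@R_ulim R) x xs pe D).
  have cs : forall x : X, unit_sphere x -> WE R X x -> super_Delta_point x ->
      ccs_Delta_point id x.
    by move=> y ys we sd; apply: (@ccs_from_super R id X (fun a b => erefl) (@R_re_le R) y ys we sd).
  split => //.
    by move=> [ex sd]; apply: cs => //; apply: ext_WE.
  move=> [pe D]; have sd := p1 (conj pe D); split => //.
  by apply: cs => //; apply: pres_WE.
- move=> X x xs.
  have p1 : preserved_extreme_point x /\ Delta_point (fun z : R[i] => 'Re z) x ->
      super_Delta_point x.
    move=> [pe D].
    exact: (@part1 R[i] (fun z => 'Re z) (fun z => z^*) (@wC R) X (@C_re_add R) (@C_re_le R)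
      (@C_re_realM R) (@C_re_cj R) (@C_norm_exp R) (@C_rot R) (@C_sup R)
      (@C_arch R) (@C_ulim R) x xs pe D).
  have cs : forall x : X, unit_sphere x -> WE R[i] X x -> super_Delta_point x ->
      ccs_Delta_point (fun z : R[i] => 'Re z) x.
    by move=> y ys we sd; apply: (@ccs_from_super R[i] (fun z => 'Re z) X (@C_re_add R) (@C_re_le R) y ys we sd).
  split => //.
    by move=> [ex sd]; apply: cs => //; apply: ext_WE.
  move=> [pe D]; have sd := p1 (conj pe D); split => //.
  by apply: cs => //; apply: pres_WE.
Qed.
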